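(* For every positive integer $N$, there exists an equal norm tight integer frame in $\mathcal{H}_3$ with $3N$ elements, and there exists an equal norm tight integer frame in $\mathcal{H}_3$ with $4N$ elements.
   Context: $\mathcal{H}_M$ is the real $M$-dimensional Hilbert space, identified with $\mathbb{R}^M$ via a fixed orthonormal basis. An equal norm tight integer frame (ENTIF) with $N$ elements in $\mathcal{H}_M$ is an $M\times N$ integer matrix $A$ of rank $M$ with $AA^T=\lambda I_M$ for some $\lambda>0$ and all columns of the same Euclidean norm. *)

(* Defs.v *)
From mathcomp Require Import all_boot all_order all_algebra.
Set Implicit Arguments. Unset Strict Implicit. Unset Printing Implicit Defensive.
Import Order.TTheory GRing.Theory Num.Theory.
Local Open Scope ring_scope.

Definition col_sqnorm (M N : nat) (A : 'M[int]_(M, N)) (j : 'I_N) : int :=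
  \sum_(i < M) A i j ^+ 2.

(* Equal norm tight integer frame with N elements in H_M (identified with R^M):
   an M x N integer matrix of rank M with A A^T = lambda I_M for some lambda > 0
   and all columns of the same Euclidean norm.  Rank is computed over rat
   (equal to the real rank, as rank is field-independent for rational matrices). *)
Definition ENTIF (M N : nat) (A : 'M[int]_(M, N)) : Prop :=
  [/\ \rank (map_mx (fun z : int => z%:~R : rat) A) = M,
      (exists2 lambda : int, 0 < lambda & A *m A^T = lambda%:M)
    & forall j k : 'I_N, col_sqnorm A j = col_sqnorm A k].

(* Main.v *)
Require Import Defs.
From mathcomp Require Import all_boot all_order all_algebra.
Import GRing.Theory Num.Theory.
Local Open Scope ring_scope.

Lemma rank_of (M n : nat) (A : 'M[int]_(M, n)) (l : int) :
  0 < l -> A *m A^T = l%:M ->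
  \rank (map_mx (fun z : int => z%:~R : rat) A) = M.
Proof.
move=> l0 HA.
set f := (fun z : int => z%:~R : rat).
have E : map_mx f A *m (map_mx f A)^T = (f l) *: 1%:M.
  rewrite map_trmx -map_mxM HA; apply/matrixP=> i j; rewrite !mxE.
  by case: (i == j); rewrite /f ?mulr1n ?mulr0n ?mulr1 ?mulr0.
apply/eqP; rewrite eqn_leq rank_leq_row /=.
have R : \rank (map_mx f A *m (map_mx f A)^T) = M.
  rewrite E mxrank_scale_nz ?mxrank1 //.
  by rewrite /f intr_eq0 lt0r_neq0.
by rewrite -{1}R mxrankM_maxl.
Qed.

Lemma sum_mod (k N : nat) (F : nat -> int) : (0 < k)%N ->
  \sum_(j < k * N) F (j %% k)%N = N%:R * \sum_(r < k) F r.
Proof.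
move=> k0; rewrite -(big_mkord xpredT (fun j => F (j %% k)%N)).
elim: N => [|N IH]; first by rewrite muln0 big_geq // mul0r.
rewrite mulnS addnC (big_cat_nat _ (leq_addr _ _)) //= IH.
have -> : \sum_(k * N <= i < k * N + k) F (i %% k)%N = \sum_(i < k) F i.
  rewrite -{1}(add0n (k * N)%N) big_addn addKn big_mkord.
  by apply: eq_bigr => i _; rewrite addnC mulnC modnMDl modn_small.
rewrite -addn1 natrD mulrDl mul1r //.
Qed.

Lemma periodic (M k N : nat) (B : 'M[int]_(M, k)) (l : int) :
  (0 < k)%N -> (0 < N)%N -> 0 < l -> B *m B^T = l%:M ->
  (forall r s, col_sqnorm B r = col_sqnorm B s) ->
  exists A : 'M[int]_(M, k * N), ENTIF A.
Proof.
case: k B => // k B _ N0 l0 HB Hc.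
pose A : 'M[int]_(M, k.+1 * N) := \matrix_(i, j) B i (inord (j %% k.+1)).
have HA : A *m A^T = (N%:R * l)%:M.
  apply/matrixP => i i'; rewrite !mxE.
  under eq_bigr do rewrite !mxE.
  rewrite (@sum_mod k.+1 N (fun r => B i (inord r) * B i' (inord r))) //.
  rewrite -mulrnAr; have := HB; move/matrixP/(_ i i'); rewrite !mxE => <-.
  congr (_ * _).
  by apply: eq_bigr => r _; rewrite !mxE inord_val.
exists A; split.
- apply: (@rank_of M (k.+1 * N) A (N%:R * l)) => //.
  by rewrite mulr_gt0 // ltr0n.
- exists (N%:R * l) => //; by rewrite mulr_gt0 // ltr0n.
- move=> j j'; rewrite /col_sqnorm.
  have E : forall j, \sum_(i < M) A i j ^+ 2 = col_sqnorm B (inord (j %% k.+1)).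
    by move=> j0; apply: eq_bigr => i _; rewrite mxE.
  by rewrite !E.
Qed.

Definition B4 : 'M[int]_(3, 4) := \matrix_(i < 3, j < 4)
  (if (i == j :> nat) || (j == 3%N :> nat) then 1 else -1).

Theorem theorem4p9 (N : nat) : (0 < N)%N ->
  (exists A : 'M[int]_(3, 3 * N), ENTIF A) /\
  (exists A : 'M[int]_(3, 4 * N), ENTIF A).
Proof.
move=> N0; split.
- apply: (@periodic 3 3 N 1%:M 1) => //.
    by rewrite trmx1 mul1mx.
  move=> r s; rewrite /col_sqnorm !big_ord_recr !big_ord0 /= !mxE.
  by case: r => [[|[|[|?]]] ?]; case: s => [[|[|[|?]]] ?].
- apply: (@periodic 3 4 N B4 4) => //.
    apply/matrixP => i j; rewrite !mxE !big_ord_recr !big_ord0 /= !mxE.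
    by case: i => [[|[|[|?]]] ?]; case: j => [[|[|[|?]]] ?].
  move=> r s; rewrite /col_sqnorm !big_ord_recr !big_ord0 /= !mxE.
  by case: r => [[|[|[|[|?]]]] ?]; case: s => [[|[|[|[|?]]]] ?].
Qed.
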